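(* Let $G$ be a graph with a correspondence-cover $(L,H)$, and let $T$ be an induced subgraph of $G$ such that: (i) every vertex of $T$ has at most one neighbor outside $T$; (ii) $2\leq |L(u)|\leq |L(v)|$ for every $u\in V(T)$ that has a (unique) neighbor $v$ outside $T$; (iii) the restriction of $(L,H)$ to $G\setminus T$ has a fractional packing; (iv) every correspondence-cover $(L_T,H_T)$ of $T$ with $|L_T(u)|=|L(u)|$ for each $u\in V(T)$ having no neighbor outside $T$, and $|L_T(u)|=|L(u)|-1$ for each $u\in V(T)$ having a neighbor outside $T$, has a fractional packing. Then $(L,H)$ has a fractional packing.
   Context: All graphs are finite and simple. $G\setminus T$ is the subgraph induced by the vertices not in $T$. A correspondence-cover of a graph $G$ is a pair $(L,H)$ where $H$ is a graph and $L$ maps each $v\in V(G)$ to a subset $L(v)\subseteq V(H)$ such that: the sets $L(v)$ partition $V(H)$; each $L(v)$ induces a clique in $H$; if $uv\notin E(G)$ there are no edges of $H$ between $L(u)$ and $L(v)$; if $uv\in E(G)$ the edges of $H$ between $L(u)$ and $L(v)$ form a matching. The restriction of $(L,H)$ to an induced subgraph $G_0$ is the cover $(L_0,H_0)$ of $G_0$ with $L_0(v)=L(v)$ for $v\in V(G_0)$ and $H_0=H-\bigcup_{u\notin V(G_0)}L(u)$. An independent transversal of a cover is an independent set of the cover graph containing exactly one vertex of each list. A cover has a fractional packing if there is a probability distribution on its independent transversals $I$ such that $\Pr(x\in I)=1/|L(v)|$ for every vertex $v$ and every $x\in L(v)$ (lists need not have equal sizes). *)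

(* Defs.v *)
From HB Require Import structures.
From mathcomp Require Import all_boot all_order all_algebra.
Set Implicit Arguments. Unset Strict Implicit. Unset Printing Implicit Defensive.
Import Order.TTheory GRing.Theory Num.Theory.
Local Open Scope ring_scope.

Definition simple_graph (V : finType) (e : rel V) : Prop :=
  symmetric e /\ irreflexive e.

Definition is_cover (V W : finType) (e : rel V) (h : rel W)
    (L : V -> {set W}) : Prop :=
  [/\ simple_graph h,
      ((forall w : W, exists v : V, w \in L v) /\
       (forall u v : V, u != v -> [disjoint L u & L v])),
      (forall (v : V) (x y : W), x \in L v -> y \in L v -> x != y -> h x y),
      (forall (u v : V) (x y : W), u != v -> ~~ e u v ->
          x \in L u -> y \in L v -> ~~ h x y)
    & (* adjacent vertices: the edges between the lists form a matching *)
      (forall (u v : V) (x x' y y' : W), e u v ->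
          x \in L u -> x' \in L u -> y \in L v -> y' \in L v ->
          h x y -> h x' y' -> (x == x') = (y == y'))].

Definition indep_transversal (V W : finType) (h : rel W)
    (L : V -> {set W}) (I : {set W}) : Prop :=
  (forall x y, x \in I -> y \in I -> ~~ h x y) /\
  (forall v : V, #|I :&: L v| = 1%N).

Definition frac_packing (R : realFieldType) (V W : finType) (h : rel W)
    (L : V -> {set W}) : Prop :=
  exists p : {set W} -> R,
    [/\ (forall I, 0 <= p I),
        (forall I, p I != 0 -> indep_transversal h L I),
        \sum_(I : {set W}) p I = 1
      & forall (v : V) (x : W), x \in L v ->
          \sum_(I : {set W} | x \in I) p I = (#|L v|%:R)^-1].

Definition sub_vert (V : finType) (S : {set V}) : finType := {v : V | v \in S}.

Definition sub_rel (V : finType) (S : {set V}) (e : rel V) : rel (sub_vert S) :=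
  fun x y => e (val x) (val y).

Definition restr_cover_vert (V W : finType) (L : V -> {set W}) (S : {set V})
  : finType := {w : W | [exists v in S, w \in L v]}.

Definition restr_cover_rel (V W : finType) (L : V -> {set W}) (S : {set V})
    (h : rel W) : rel (restr_cover_vert L S) :=
  fun x y => h (val x) (val y).

Definition restr_cover_list (V W : finType) (L : V -> {set W}) (S : {set V})
    (v : sub_vert S) : {set restr_cover_vert L S} :=
  [set w | val w \in L (val v)].

Definition has_out_nbr (V : finType) (e : rel V) (T : {set V}) (u : V) : bool :=
  [exists v, e u v && (v \notin T)].

Arguments restr_cover_vert {V W} L S.
Arguments restr_cover_rel {V W} L S h _ _.
Arguments restr_cover_list {V W} L S v.
Arguments sub_rel {V} S e _ _.
Arguments has_out_nbr {V} e T u.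

(* Main.v *)
Require Import Defs.
From HB Require Import structures.
From mathcomp Require Import all_boot all_order all_algebra ring.
Set Implicit Arguments. Unset Strict Implicit. Unset Printing Implicit Defensive.
Import Order.TTheory GRing.Theory Num.Theory.
Local Open Scope ring_scope.

Section Main.
Variables (R : realFieldType) (V W : finType) (e : rel V) (h : rel W)
  (L : V -> {set W}) (T : {set V}).
Hypothesis He : simple_graph e.
Hypothesis HC : is_cover e h L.
Hypothesis Hi : forall u, u \in T -> (#|[set v | e u v & v \notin T]| <= 1)%N.
Hypothesis Hii : forall u v, u \in T -> v \notin T -> e u v ->
     (2 <= #|L u|)%N /\ (#|L u| <= #|L v|)%N.

Lemma hsym : symmetric h. Proof. by case: HC => -[]. Qed.
Lemma Lpart w : exists v, w \in L v. Proof. by case: HC => _ [] . Qed.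
Lemma Luniq u v w : w \in L u -> w \in L v -> u = v.
Proof.
move=> wu wv; apply/eqP; apply/negPn/negP => neq.
case: HC => _ [_ /(_ _ _ neq) /disjointFr /(_ wu)]; by rewrite wv.
Qed.
Lemma Lnonadj u v x y : u != v -> ~~ e u v -> x \in L u -> y \in L v -> ~~ h x y.
Proof. by case: HC => _ _ _ H _; apply: H. Qed.
Lemma Lmatch u v x x' y y' : e u v ->
          x \in L u -> x' \in L u -> y \in L v -> y' \in L v ->
          h x y -> h x' y' -> (x == x') = (y == y').
Proof. by case: HC => _ _ _ _ H; apply: H. Qed.

Definition Dset := [set u | (u \in T) && has_out_nbr e T u].
Definition nb (u : V) : V := odflt u [pick v | e u v && (v \notin T)].

Lemma nbP u : u \in Dset -> e u (nb u) && (nb u \notin T).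
Proof.
rewrite inE => /andP[_ /existsP[v Hv]]; rewrite /nb; case: pickP => //=.
by move=> /(_ v); rewrite Hv.
Qed.

Lemma nb_uniq u v : u \in T -> e u v -> v \notin T -> v = nb u.
Proof.
move=> uT euv vT.
have uD : u \in Dset by rewrite inE uT; apply/existsP; exists v; rewrite euv.
have /andP[e1 n1] := nbP uD.
have := Hi uT; rewrite leq_eqVlt ltnS leqn0 => /orP[] Hc.
  apply/eqP; apply/negPn/negP => neq.
  have : (2 <= #|[set v | e u v & v \notin T]|)%N.
    rewrite (cardsD1 v) inE euv vT add1n ltnS card_gt0; apply/set0Pn.
    by exists (nb u); rewrite !inE e1 n1 eq_sym neq.
  by rewrite (eqP Hc).
by move/eqP: Hc => /cards0_eq /setP /(_ v); rewrite !inE euv vT.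
Qed.

Lemma Dset_out u v : u \in T -> v \notin T -> e u v -> u \in Dset.
Proof. by move=> uT vT euv; rewrite inE uT; apply/existsP; exists v; rewrite euv. Qed.


Lemma sum_uniq (A : {set W}) (P : pred W) :
  (forall y y', y \in A -> y' \in A -> P y -> P y' -> y = y') ->
  \sum_(y in A) (P y)%:R = ([exists y in A, P y]%:R : R).
Proof.
move=> Hu; case: existsP => [[y0 /andP[y0A Py0]]|Hn].
  rewrite (bigD1 y0) //= Py0 big1 ?addr0 // => y /andP[yA ny].
  by case Py: (P y) => //; move: ny; rewrite (Hu _ _ yA y0A Py Py0) eqxx.
by rewrite big1 // => y yA; case Py: (P y) => //; case: Hn; exists y; rewrite yA.
Qed.

Definition Mv u := [set x in L (nb u) | [exists y in L u, h x y]].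
Definition Mu u := [set y in L u | [exists x in L (nb u), h x y]].

Lemma card_M u : u \in Dset -> #|Mu u| = #|Mv u|.
Proof.
move=> uD; have /andP[euv nvT] := nbP uD.
have evu : e (nb u) u by case: He => s _; rewrite s.
set E := [set p : W * W | [&& p.1 \in L (nb u), p.2 \in L u & h p.1 p.2]].
have inj1 : {in E &, injective (fun p : W * W => p.1)}.
  move=> [x y] [x' y']; rewrite !inE /= => /and3P[xv yu hxy] /and3P[xv' yu' hxy'] exx.
  rewrite /= in exx; subst x'.
  by have := Lmatch evu xv xv' yu yu' hxy hxy'; rewrite eqxx => /esym/eqP ->.
have inj2 : {in E &, injective (fun p : W * W => p.2)}.
  move=> [x y] [x' y']; rewrite !inE /= => /and3P[xv yu hxy] /and3P[xv' yu' hxy'] eyy.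
  rewrite /= in eyy; subst y'.
  by have := Lmatch evu xv xv' yu yu' hxy hxy'; rewrite eqxx => /eqP ->.
have -> : Mv u = [set p.1 | p in E].
  apply/setP => x; rewrite !inE; apply/andP/imsetP.
    by move=> [xv /existsP[y /andP[yu hxy]]]; exists (x, y); rewrite // inE xv yu hxy.
  move=> [[x' y]]; rewrite inE /= => /and3P[xv yu hxy] ->; split => //.
  by apply/existsP; exists y; rewrite yu.
have -> : Mu u = [set p.2 | p in E].
  apply/setP => y; rewrite !inE; apply/andP/imsetP.
    by move=> [yu /existsP[x /andP[xv hxy]]]; exists (x, y); rewrite // inE xv yu hxy.
  move=> [[x y']]; rewrite inE /= => /and3P[xv yu hxy] ->; split => //.
  by apply/existsP; exists x; rewrite xv.
by rewrite !card_in_imset.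
Qed.

Definition cc u y : R :=
  ((#|L (nb u)|%:R / #|L u|%:R - (y \in Mu u)%:R) / (#|L (nb u)|%:R - (#|Mu u|)%:R)).

Definition nu u x y : R :=
  if (x \in L (nb u)) && (y \in L u) then
    (h x y)%:R + (x \notin Mv u)%:R * cc u y
  else 0.

Section Nu.
Variable u : V.
Hypothesis uD : u \in Dset.
Let uT : u \in T. Proof. by move: uD; rewrite inE => /andP[]. Qed.
Let euv : e u (nb u). Proof. by have /andP[] := nbP uD. Qed.
Let nvT : nb u \notin T. Proof. by have /andP[] := nbP uD. Qed.
Let evu : e (nb u) u. Proof. by case: He => s _; rewrite s. Qed.
Let ab : (2 <= #|L u|)%N /\ (#|L u| <= #|L (nb u)|)%N. Proof. exact: Hii. Qed.

Lemma Mu_sub : Mu u \subset L u. Proof. by apply/subsetP => y; rewrite inE => /andP[]. Qed.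
Lemma Mv_sub : Mv u \subset L (nb u). Proof. by apply/subsetP => y; rewrite inE => /andP[]. Qed.

Lemma m_le_b : (#|Mu u| <= #|L (nb u)|)%N.
Proof. by rewrite card_M // subset_leq_card // Mv_sub. Qed.

Lemma cc_ge0 y : 0 <= cc u y.
Proof.
case: ab => a2 ab'.
apply: divr_ge0; last by rewrite subr_ge0 ler_nat m_le_b.
rewrite subr_ge0; apply: (@le_trans _ _ 1); first by case: (y \in Mu u).
rewrite ler_pdivlMr ?mul1r ?ler_nat // ltr0n; by apply: leq_trans a2.
Qed.

Lemma nu_ge0 x y : 0 <= nu u x y.
Proof.
rewrite /nu; case: ifP => // _; apply: addr_ge0; first by case: (h x y).
by apply: mulr_ge0; [case: (x \notin _)| exact: cc_ge0].
Qed.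

Lemma nu_supp x y : nu u x y != 0 -> (x \in L (nb u)) && (y \in L u).
Proof. by rewrite /nu; case: ifP => //; rewrite eqxx. Qed.

Lemma nu_compat x y y' : nu u x y != 0 -> y' \in L u -> h x y' -> y = y'.
Proof.
move=> nz y'u hxy'; have /andP[xv yu] := nu_supp nz.
move: nz; rewrite /nu xv yu /=.
have xM : x \in Mv u by rewrite inE xv; apply/existsP; exists y'; rewrite y'u.
rewrite xM /= mul0r addr0; case hxy: (h x y); last by rewrite eqxx.
by move=> _; have := Lmatch evu xv xv yu y'u hxy hxy'; rewrite eqxx => /esym/eqP.
Qed.

Lemma sum_h_y x : x \in L (nb u) -> \sum_(y in L u) ((h x y)%:R : R) = (x \in Mv u)%:R.
Proof.
move=> xv; rewrite sum_uniq; last first.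
  move=> y y' yu y'u hy hy'; have := Lmatch evu xv xv yu y'u hy hy'.
  by rewrite eqxx => /esym/eqP.
by rewrite inE xv.
Qed.

Lemma sum_h_x y : y \in L u -> \sum_(x in L (nb u)) ((h x y)%:R : R) = (y \in Mu u)%:R.
Proof.
move=> yu; rewrite (sum_uniq (P := fun x => h x y)); last first.
  move=> x x' xv x'v hx hx'; have := Lmatch evu xv x'v yu yu hx hx'.
  by rewrite eqxx => /eqP.
by rewrite inE yu.
Qed.

Lemma nu_out x y : y \notin L u -> nu u x y = 0.
Proof. by rewrite /nu => /negbTE ->; rewrite andbF. Qed.

Lemma nu_sum_y x : x \in L (nb u) -> \sum_y nu u x y = 1.
Proof.
move=> xv; rewrite (bigID (fun y => y \in L u)) /= [X in _ + X]big1 ?addr0;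
  last by move=> y /nu_out.
rewrite (eq_bigr (fun y => (h x y)%:R + (x \notin Mv u)%:R * cc u y)) => [|y yu]; last by rewrite /nu xv yu.
rewrite big_split /= sum_h_y // -big_distrr /=.
case xM: (x \in Mv u) => /=; first by rewrite mul0r addr0.
rewrite add0r mul1r /cc -big_distrl /= big_split /= sumrN sumr_const.
have -> : \sum_(i in L u) ((i \in Mu u)%:R : R) = #|Mu u|%:R.
  rewrite -sum1_card (big_setID (Mu u)) /= (setIidPr Mu_sub).
  rewrite [X in _ + X]big1 ?addr0; last by move=> y; rewrite inE => /andP[/negbTE ->].
  by rewrite natr_sum; apply: eq_bigr => y ->.
rewrite -[_ *+ #|L u|]mulr_natr divfK; last first.
  by rewrite pnatr_eq0 -lt0n; case: ab => a2 _; apply: leq_trans a2.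
rewrite mulfV // subr_eq0 eqr_nat card_M //; apply/negP => /eqP Hc.
have : Mv u = L (nb u) by apply/eqP; rewrite eqEcard Mv_sub Hc leqnn.
by move/setP/(_ x); rewrite xM xv.
Qed.

Lemma nu_sum_x y : y \in L u -> \sum_x nu u x y = #|L (nb u)|%:R / #|L u|%:R.
Proof.
move=> yu; rewrite (bigID (fun x => x \in L (nb u))) /= [X in _ + X]big1 ?addr0;
  last by move=> x; rewrite /nu => /negbTE ->.
rewrite (eq_bigr (fun x => (h x y)%:R + (x \notin Mv u)%:R * cc u y)) => [|x xv]; last by rewrite /nu xv yu.
rewrite big_split /= sum_h_x // -big_distrl /=.
have -> : \sum_(x in L (nb u)) ((x \notin Mv u)%:R : R) = (#|L (nb u)| - #|Mu u|)%:R.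
  rewrite card_M // -(cardsID (Mv u) (L (nb u))) (setIidPr Mv_sub) addKn.
  rewrite -sum1_card natr_sum (big_setID (Mv u)) /= (setIidPr Mv_sub).
  rewrite big1 ?add0r; last by move=> x ->.
  by apply: eq_bigr => x; rewrite inE => /andP[/negbTE ->].
rewrite natrB ?m_le_b // /cc.
case: (eqVneq #|L (nb u)| #|Mu u|) => Hb.
  have Hab : #|L u| = #|Mu u|.
    apply/eqP; rewrite eqn_leq [(#|Mu u| <= _)%N]subset_leq_card ?Mu_sub ?andbT -?Hb; by case: ab.
  have yM : y \in Mu u.
    have : Mu u = L u by apply/eqP; rewrite eqEcard Mu_sub Hab leqnn.
    by move/setP/(_ y); rewrite yu.
  rewrite yM Hb subrr invr0 !mulr0 addr0 -Hab mulfV //.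
  by rewrite pnatr_eq0 -lt0n; case: ab => a2 _; apply: leq_trans a2.
rewrite mulrCA mulfV ?mulr1; first by rewrite addrC subrK.
by rewrite subr_eq0 eqr_nat.
Qed.
End Nu.


Notation W' := (restr_cover_vert L (~: T)).
Notation h' := (restr_cover_rel L (~: T) h).
Notation L' := (restr_cover_list L (~: T)).

Definition lift (I' : {set W'}) : {set W} := [set val x | x in I'].

Lemma lift_out I' x : x \in lift I' -> exists2 v, v \notin T & x \in L v.
Proof.
case/imsetP => x' _ ->; have := valP x'; case/existsP => v /andP[].
by rewrite inE => vT xv; exists v.
Qed.

Lemma lift_T I' u : u \in T -> lift I' :&: L u = set0.
Proof.
move=> uT; apply/setP => x; rewrite !inE; apply/andP => -[/lift_out[v vT xv] xu].
by move: vT; rewrite (Luniq xv xu) uT.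
Qed.

Lemma lift_card I' v : v \notin T -> indep_transversal h' L' I' ->
  #|lift I' :&: L v| = 1%N.
Proof.
move=> vT [_ Hc].
have vT' : v \in ~: T by rewrite inE.
have <- := Hc (Sub v vT').
have -> : lift I' :&: L v = [set val x | x in I' :&: L' (Sub v vT')].
  apply/setP => x; rewrite !inE; apply/idP/idP.
    move=> /andP[/imsetP[x' x'I ->] xv]; apply/imsetP; exists x' => //; by rewrite !inE x'I.
  move=> /imsetP[x']; rewrite !inE => /andP[x'I xv] ->; rewrite xv andbT.
  by rewrite /lift mem_imset //; apply: val_inj.
by rewrite card_in_imset //; move=> a b _ _; apply: val_inj.
Qed.

Lemma lift_indep I' a b : indep_transversal h' L' I' ->
  a \in lift I' -> b \in lift I' -> ~~ h a b.
Proof.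
move=> [Hi' _] /imsetP[a' a'I ->] /imsetP[b' b'I ->]; exact: Hi'.
Qed.

Lemma card_L' v (vT : v \in ~: T) : #|L' (Sub v vT)| = #|L v|.
Proof.
have -> : L v = [set val x | x in L' (Sub v vT)].
  apply/setP => x; apply/idP/imsetP.
    move=> xv; have px : [exists v in ~: T, x \in L v] by apply/existsP; exists v; rewrite vT.
    by exists (Sub x px : W'); rewrite // inE.
  by move=> [x']; rewrite inE => xv ->.
by rewrite card_in_imset //; move=> a b _ _; apply: val_inj.
Qed.

Variable p' : {set W'} -> R.
Hypothesis p'0 : forall I, 0 <= p' I.
Hypothesis p'T : forall I, p' I != 0 -> indep_transversal h' L' I.
Hypothesis p'1 : \sum_(I : {set W'}) p' I = 1.
Hypothesis p'm : forall (v : sub_vert (~: T)) (x : W'), x \in L' v ->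
          \sum_(I : {set W'} | x \in I) p' I = (#|L' v|%:R)^-1.

Lemma p'marg x v : v \notin T -> x \in L v ->
  \sum_(I : {set W'}) p' I * (x \in lift I)%:R = (#|L v|%:R)^-1.
Proof.
move=> vT xv; have vT' : v \in ~: T by rewrite inE.
have px : [exists v in ~: T, x \in L v] by apply/existsP; exists v; rewrite vT'.
rewrite -(card_L' vT') -(p'm (x := Sub x px)); last by rewrite inE.
rewrite [RHS]big_mkcond /=; apply: eq_bigr => I _.
have -> : (x \in lift I) = ((Sub x px : W') \in I).
  by rewrite /lift -[x]/(val (Sub x px : W')) mem_imset //; apply: val_inj.
by case: (_ \in I); rewrite ?mulr1 ?mulr0.
Qed.

Definition rho u I' y := \sum_(x in lift I') nu u x y.

Lemma rho_ge0 u I' y : u \in Dset -> 0 <= rho u I' y.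
Proof. by move=> uD; apply: sumr_ge0 => x _; apply: nu_ge0. Qed.

Lemma rho_sum u I' : u \in Dset -> #|lift I' :&: L (nb u)| = 1%N ->
  \sum_y rho u I' y = 1.
Proof.
move=> uD Hc; rewrite /rho exchange_big /=.
rewrite (eq_bigr (fun x => if x \in L (nb u) then 1 else 0 : R)); last first.
  move=> x _; case xv: (x \in L (nb u)); first by rewrite nu_sum_y.
  by rewrite big1 // => y _; rewrite /nu xv.
rewrite -big_mkcondr /= sumr_const (eq_card (B := lift I' :&: L (nb u))) ?Hc //.
  by move=> x; rewrite !inE.
Qed.

Lemma rho_marg u y : u \in Dset -> y \in L u ->
  \sum_(I : {set W'}) p' I * rho u I y = (#|L u|%:R)^-1.
Proof.
move=> uD yu.
have bpos : (#|L (nb u)|%:R : R) != 0.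
  have /andP[euv nvT] := nbP uD.
  have uT : u \in T by move: uD; rewrite inE => /andP[].
  case: (Hii uT nvT euv) => a2 ab; rewrite pnatr_eq0 -lt0n.
  by apply: leq_trans ab; apply: leq_trans a2.
transitivity (\sum_x nu u x y / #|L (nb u)|%:R).
  rewrite /rho.
  under eq_bigr do rewrite big_distrr /= big_mkcond /=.
  rewrite exchange_big /=; apply: eq_bigr => x _.
  case xv: (x \in L (nb u)); last first.
    by rewrite /nu xv /= mul0r big1 // => I _; case: ifP; rewrite ?mulr0.
  have nvT : nb u \notin T by have /andP[] := nbP uD.
  rewrite -(p'marg nvT xv) big_distrr /=; apply: eq_bigr => I _.
  by case: ifP; rewrite ?mulr1 ?mulr0 // mulrC.
rewrite -big_distrl /= nu_sum_x // mulrC mulrA mulVf ?mul1r //.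
Qed.

Lemma rho_supp u I' y : rho u I' y != 0 -> exists2 x, x \in lift I' & nu u x y != 0.
Proof.
move=> nz; case: (pickP [pred x | (x \in lift I') && (nu u x y != 0)]) => [x /andP[]|Hn].
  by exists x.
move: nz; rewrite /rho big1 ?eqxx // => x xI; apply/eqP; apply/negPn/negP => nz.
by move: (Hn x); rewrite /= xI nz.
Qed.


Notation D := (sub_vert Dset).

Definition wgt I' (r : {ffun D -> W}) := \prod_(d : D) rho (val d) I' (r d).

Definition Good I' := forall v, v \notin T -> #|lift I' :&: L v| = 1%N.

Lemma wgt_ge0 I' r : 0 <= wgt I' r.
Proof. by apply: prodr_ge0 => d _; apply: rho_ge0; apply: valP. Qed.

Lemma wgt_nz I' r d : wgt I' r != 0 -> rho (val d) I' (r d) != 0.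
Proof. by move/prodf_neq0; apply. Qed.

Lemma wgt_valid I' r d : wgt I' r != 0 -> r d \in L (val d).
Proof.
move/(wgt_nz d)/rho_supp => [x _ /nu_supp /andP[]] //.
Qed.

Lemma wgt_sum I' : Good I' -> \sum_(r : {ffun D -> W}) wgt I' r = 1.
Proof.
move=> G; rewrite /wgt -(bigA_distr_bigA (fun (d : D) y => rho (val d) I' y)) /=.
apply: big1 => d _; apply: rho_sum; first exact: valP.
by apply: G; have /andP[] := nbP (valP d).
Qed.

Lemma wgt_marg I' d y : Good I' ->
  \sum_(r : {ffun D -> W}) wgt I' r * ((r d == y)%:R) = rho (val d) I' y.
Proof.
move=> G.
pose F (d' : D) z := rho (val d') I' z * (if d' == d then (z == y)%:R else 1).
transitivity (\sum_(r : {ffun D -> W}) \prod_(d' : D) F d' (r d')).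
  apply: eq_bigr => r _; rewrite /F big_split /= /wgt; congr (_ * _).
  by rewrite (bigD1 d) //= eqxx big1 ?mulr1 // => d' /negbTE ->.
rewrite -(bigA_distr_bigA F) /= (bigD1 d) //= [X in _ * X]big1 ?mulr1.
  rewrite /F eqxx (bigD1 y) //= eqxx mulr1 big1 ?addr0 // => z /negbTE ->.
  by rewrite mulr0.
move=> d' /negbTE nd; rewrite /F nd.
under eq_bigr do rewrite mulr1.
apply: rho_sum; first exact: valP.
by apply: G; have /andP[] := nbP (valP d').
Qed.


Definition Rem (r : {ffun D -> W}) : {set W} := [set y | y \in codom r].
Definition valid (r : {ffun D -> W}) := forall d : D, r d \in L (val d).

Definition WT (r : {ffun D -> W}) : finType :=
  {w : W | [exists u in T, w \in L u] && (w \notin Rem r)}.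
Definition hT r : rel (WT r) := fun a b => h (val a) (val b).
Definition LT r (u : sub_vert T) : {set WT r} := [set w | val w \in L (val u)].
Definition liftT r (K : {set WT r}) : {set W} := [set val x | x in K].
Arguments hT : clear implicits.
Arguments LT : clear implicits.

Lemma Rem_notD r u y : valid r -> y \in L u -> u \notin Dset -> y \notin Rem r.
Proof.
move=> vr yu uD; rewrite inE; apply/negP => /codomP[d ed]; rewrite ed in yu.
by have := Luniq (vr d) yu => ed2; move: uD; rewrite -ed2 (valP d).
Qed.

Lemma Rem_D r u (uD : u \in Dset) y : valid r -> y \in L u ->
  (y \in Rem r) = (y == r (Sub u uD)).
Proof.
move=> vr yu; rewrite inE; apply/idP/eqP; last by move=> ->; apply: codom_f.
case/codomP => d ed; subst y; congr (r _); apply: val_inj => /=.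
exact: Luniq (vr d) yu.
Qed.

Lemma card_LT r (u : sub_vert T) : valid r ->
  #|LT r u| = (#|L (val u)| - (val u \in Dset))%N.
Proof.
move=> vr.
have -> : #|LT r u| = #|L (val u) :\: Rem r|.
  rewrite -(card_in_imset (f := val) (D := LT r u)); last by move=> a b _ _; apply: val_inj.
  apply: eq_card => y; rewrite !inE; apply/imsetP/andP.
    move=> [y']; rewrite inE => yu ->; split => //; by have := valP y'; rewrite inE => /andP[].
  move=> [nR yu].
  have py : [exists u in T, y \in L u] && (y \notin Rem r).
    by rewrite inE nR andbT; apply/existsP; exists (val u); rewrite yu (valP u).
  by exists (Sub y py : WT r); rewrite // inE SubK.
rewrite -(cardsID (Rem r) (L (val u))).
case: (boolP (val u \in Dset)) => uD.
  have -> : L (val u) :&: Rem r = [set r (Sub (val u) uD)].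
    apply/setP => y; rewrite in_setI in_set1; apply/andP/eqP.
      by move=> [yu]; rewrite (Rem_D uD vr yu) => /eqP.
    move=> ->; split; first exact: (vr (Sub (val u) uD)).
    by rewrite inE; apply: codom_f.
  by rewrite cards1 addKn.
rewrite (_ : L (val u) :&: Rem r = set0) ?cards0 ?add0n ?subn0 //.
apply/setP => y; rewrite in_setI in_set0; apply/andP => -[yu yR].
by move: (Rem_notD vr yu uD); rewrite yR.
Qed.

Lemma cover_T r : is_cover (sub_rel T e) (hT r) (LT r).
Proof.
case: HC => [[hs hi] [Hp Hd] Hcl Hna Hm].
split.
- by split; [move=> a b; apply: hs | move=> a; apply: hi].
- split.
    move=> w; have /andP[/existsP[u /andP[uT wu]] _] := valP w.
    by exists (Sub u uT : sub_vert T); rewrite inE SubK.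
  move=> u v nuv; rewrite -setI_eq0; apply/eqP/setP => w; rewrite !inE.
  apply/andP => -[wu wv].
  by have := Luniq wu wv => /val_inj euv; move: nuv; rewrite euv eqxx.
- move=> v x y; rewrite !inE => xv yv nxy; apply: Hcl xv yv _.
  by apply: contra nxy => /eqP /val_inj ->.
- move=> u v x y nuv neuv; rewrite !inE => xu yv.
  have nuv' : val u != val v by apply: contra nuv => /eqP /val_inj ->.
  exact: (Hna _ _ _ _ nuv' neuv xu yv).
- move=> u v x x' y y' euv; rewrite !inE => xu x'u yv y'v hxy hx'y'.
  by rewrite -!(inj_eq val_inj); apply: Hm xu x'u yv y'v hxy hx'y'.
Qed.


Hypothesis Hiv : forall (WT : finType) (hT : rel WT) (LT : sub_vert T -> {set WT}),
     is_cover (sub_rel T e) hT LT ->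
     (forall u : sub_vert T,
        #|LT u| = if has_out_nbr e T (val u) then (#|L (val u)| - 1)%N
                  else #|L (val u)|) ->
     frac_packing R hT LT.

Definition Qprops r (q : {set W} -> R) :=
  [/\ (forall J, 0 <= q J), \sum_J q J = 1,
   (forall J, q J != 0 -> [/\ (forall a b, a \in J -> b \in J -> ~~ h a b),
        (forall u, u \in T -> #|J :&: L u| = 1%N),
        (forall y, y \in J -> exists2 u, u \in T & y \in L u) &
        (forall y, y \in J -> y \notin Rem r)])
   & (forall u y, u \in T -> y \in L u ->
        \sum_J q J * (y \in J)%:R = (y \notin Rem r)%:R / (#|L u| - (u \in Dset))%:R)].

Lemma sum_ind (A : finType) (a : A) (G : A -> R) :
  \sum_(J : A) (J == a)%:R * G J = G a.
Proof.
rewrite (bigD1 a) //= eqxx mul1r big1 ?addr0 // => J /negbTE ->; by rewrite mul0r.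
Qed.

Lemma reduced r : valid r -> exists q, Qprops r q.
Proof.
move=> vr.
have [pT [pT0 pTT pT1 pTm]] : frac_packing R (hT r) (LT r).
  apply: Hiv; first exact: cover_T.
  move=> u; rewrite card_LT // inE (valP u) /=.
  by case: (has_out_nbr e T (val u)); rewrite ?subn0.
exists (fun J => \sum_(K : {set WT r}) pT K * (J == liftT K)%:R); split.
- by move=> J; apply: sumr_ge0 => K _; apply: mulr_ge0 => //; case: (_ == _).
- rewrite exchange_big /=; rewrite -[RHS]pT1; apply: eq_bigr => K _.
  under eq_bigr do rewrite mulrC.
  rewrite -big_distrl /= (eq_bigr (fun J => (J == liftT K)%:R * 1)); last first.
    by move=> J _; rewrite mulr1.
  by rewrite sum_ind mul1r.
- move=> J nz.
  case: (pickP [pred K | (pT K != 0) && (J == liftT K)]) => [K /andP[nzK /eqP ->]|Hn];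
    last first.
    move: nz; rewrite big1 ?eqxx // => K _.
    by move: (Hn K) => /= /negbT; rewrite negb_and negbK => /orP[/eqP ->|/negbTE ->];
      rewrite ?mul0r ?mulr0.
  have [Hind Htr] := pTT _ nzK.
  split.
  + by move=> a b /imsetP[a' a'K ->] /imsetP[b' b'K ->]; apply: Hind.
  + move=> u uT; rewrite -(Htr (Sub u uT)) -(card_in_imset (f := val)); last first.
      by move=> a b _ _; apply: val_inj.
    apply: eq_card => y; rewrite !inE; apply/andP/imsetP.
      move=> [/imsetP[y' y'K ->] yu]; exists y' => //; by rewrite !inE y'K.
    by move=> [y']; rewrite !inE => /andP[y'K y'u] ->; rewrite /liftT mem_imset //;
      apply: val_inj.
  + move=> y /imsetP[y' _ ->]; have /andP[/existsP[u /andP[uT yu]] _] := valP y'.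
    by exists u.
  + by move=> y /imsetP[y' _ ->]; have /andP[_] := valP y'.
- move=> u y uT yu.
  transitivity (\sum_(K : {set WT r}) pT K * (y \in liftT K)%:R).
    under eq_bigr do rewrite big_distrl /=.
    rewrite exchange_big /=; apply: eq_bigr => K _.
    rewrite (eq_bigr (fun J => (J == liftT K)%:R * (pT K * (y \in J)%:R))).
      by rewrite sum_ind.
    by move=> J _; rewrite -mulrA mulrCA.
  case: (boolP (y \in Rem r)) => yR.
    rewrite /= mul0r big1 // => K _.
    rewrite (_ : y \in liftT K = false) ?mulr0 //; apply/negP => /imsetP[y' _ ey].
    by have /andP[_] := valP y'; rewrite -ey yR.
  have py : [exists u in T, y \in L u] && (y \notin Rem r).
    by rewrite yR andbT; apply/existsP; exists u; rewrite uT yu.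
  have uT' : u \in T := uT.
  rewrite /= mul1r -[u]/(val (Sub u uT' : sub_vert T)) -(card_LT (r := r)) //.
  rewrite -(pTm _ (Sub y py : WT r)); last by rewrite inE.
  rewrite [RHS]big_mkcond /=; apply: eq_bigr => K _.
  rewrite -[y]/(val (Sub y py : WT r)) /liftT mem_imset; last exact: val_inj.
  by case: (_ \in K); rewrite ?mulr1 ?mulr0.
Qed.


Lemma sum_nz (A : finType) (f : A -> R) : \sum_i f i != 0 -> exists i, f i != 0.
Proof.
move=> nz; case: (pickP [pred i | f i != 0]) => [i fi|Hn]; first by exists i.
by move: nz; rewrite big1 ?eqxx // => i _; move: (Hn i) => /= /negbT; rewrite negbK => /eqP.
Qed.

Lemma card1_eq (A : {set W}) a b : #|A| = 1%N -> a \in A -> b \in A -> a = b.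
Proof. by move/eqP/cards1P => [c ->]; rewrite !inE => /eqP -> /eqP ->. Qed.

Lemma final : frac_packing R h L.
Proof.
have [q Hq] : exists q : {ffun D -> W} -> {set W} -> R,
    forall r, valid r -> Qprops r (q r).
  have H : forall r : {ffun D -> W}, exists qr : {set W} -> R, valid r -> Qprops r qr.
    move=> r; case: (boolP [forall d, r d \in L (val d)]) => [/forallP vr|nvr].
      by have [qr Hqr] := reduced vr; exists qr.
    by exists (fun _ => 0) => vr; move: nvr; rewrite negb_forall => /existsP[d]; rewrite vr.
  have [q Hq] := fin_all_exists H; by exists q.
pose F I' r J := p' I' * wgt I' r * q r J.
pose p I := \sum_(I' : {set W'}) \sum_(r : {ffun D -> W}) \sum_(J : {set W})
   F I' r J * (I == lift I' :|: J)%:R.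
have swap : forall G : {set W} -> R, \sum_I G I * p I =
    \sum_(I' : {set W'}) \sum_(r : {ffun D -> W}) \sum_(J : {set W})
      F I' r J * G (lift I' :|: J).
  move=> G; rewrite /p.
  under eq_bigr do rewrite big_distrr /=.
  rewrite exchange_big; apply: eq_bigr => I' _.
  under eq_bigr do rewrite big_distrr /=.
  rewrite exchange_big; apply: eq_bigr => r _.
  under eq_bigr do rewrite big_distrr /=.
  rewrite exchange_big; apply: eq_bigr => J _.
  rewrite (eq_bigr (fun I => (I == lift I' :|: J)%:R * (F I' r J * G I))) ?sum_ind //.
  by move=> I _; ring.
have Fz : forall I' r J, F I' r J != 0 ->
    [/\ p' I' != 0, wgt I' r != 0 & q r J != 0].
  move=> I' r J; rewrite /F !mulf_eq0 !negb_or => /andP[/andP[-> ->] ->]; done.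
have Hp' : forall I', p' I' != 0 -> Good I'.
  by move=> I' nz v vT; apply: lift_card vT (p'T nz).
have Hw : forall I' r, wgt I' r != 0 -> valid r.
  by move=> I' r nz d; apply: wgt_valid nz.
have inner : forall I', \sum_(r : {ffun D -> W}) \sum_(J : {set W}) F I' r J = p' I'.
  move=> I'; case: (eqVneq (p' I') 0) => [z|nz].
    by rewrite z big1 // => r _; rewrite big1 // => J _; rewrite /F z !mul0r.
  rewrite -[RHS]mulr1 -(wgt_sum (Hp' _ nz)) big_distrr /=; apply: eq_bigr => r _.
  case: (eqVneq (wgt I' r) 0) => [z|wz].
    by rewrite z mulr0 big1 // => J _; rewrite /F z mulr0 mul0r.
  have [_ Q2 _ _] := Hq r (Hw _ _ wz).
  by rewrite /F -big_distrr /= Q2 mulr1.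
exists p; split.
- move=> I; apply: sumr_ge0 => I' _; apply: sumr_ge0 => r _; apply: sumr_ge0 => J _.
  case: (eqVneq (F I' r J) 0) => [->|/Fz[_ wz _]]; first by rewrite mul0r.
  have [Q1 _ _ _] := Hq r (Hw _ _ wz).
  apply: mulr_ge0; last by case: (_ == _).
  by apply: mulr_ge0; [apply: mulr_ge0; [apply: p'0|apply: wgt_ge0]|apply: Q1].
- move=> I nz.
  have [I' nz1] := sum_nz nz; have [r nz2] := sum_nz nz1; have [J nz3] := sum_nz nz2.
  move: nz3; case: (eqVneq I (lift I' :|: J)) => [eI|nI]; last by rewrite mulr0 eqxx.
  rewrite eI mulr1 => /Fz[pz wz qz].
  have ITr := p'T pz; have vr := Hw _ _ wz.
  have [_ _ Q3 _] := Hq r vr; have [Qi Qc Qin QnR] := Q3 J qz.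
  have cross : forall a b, a \in lift I' -> b \in J -> ~~ h a b.
    move=> a b aI bJ; apply/negP => hab.
    have [v vT av] := lift_out aI; have [u uT bu] := Qin b bJ.
    have nuv : v != u by apply: contraNneq vT => ->.
    have evu : e v u.
      by apply/negPn/negP => ne; move: (Lnonadj nuv ne av bu); rewrite hab.
    have euv : e u v by case: He => s _; rewrite s.
    have ev := nb_uniq uT euv vT.
    have uD := Dset_out uT vT euv.
    have := wgt_nz (Sub u uD : D) wz => /rho_supp [x xI nzx].
    have /andP[xv _] := nu_supp nzx; rewrite /= -ev in xv nzx.
    have ax : a = x.
      by apply: (card1_eq (lift_card vT ITr)); rewrite inE ?aI ?av ?xI ?xv.
    rewrite -ax in nzx.
    have := nu_compat uD nzx bu hab => rb.
    by move: (QnR b bJ); rewrite -rb inE codom_f.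
  split.
  + move=> a b; rewrite !inE => /orP[aI|aJ] /orP[bI|bJ].
    * exact: lift_indep ITr aI bI.
    * exact: cross.
    * by rewrite hsym; apply: cross.
    * exact: Qi.
  + move=> w; case: (boolP (w \in T)) => wT.
      rewrite setIUl (lift_T I' wT) set0U; exact: Qc.
    rewrite setIUl (_ : J :&: L w = set0) ?setU0; first exact: lift_card wT ITr.
    apply/setP => y; rewrite !inE; apply/andP => -[yJ yw].
    have [u uT yu] := Qin y yJ; by move: wT; rewrite (Luniq yw yu) uT.
- have := swap (fun _ => 1); under eq_bigr do rewrite mul1r.
  move=> ->; rewrite -[RHS]p'1; apply: eq_bigr => I' _; rewrite -[RHS]inner.
  by apply: eq_bigr => r _; apply: eq_bigr => J _; rewrite mulr1.
- move=> v x xv.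
  transitivity (\sum_(I : {set W}) (x \in I)%:R * p I).
    rewrite big_mkcond /=; apply: eq_bigr => I _.
    by case: (x \in I); rewrite ?mul1r ?mul0r.
  rewrite swap.
  case: (boolP (v \in T)) => vT; last first.
    rewrite -(p'marg vT xv); apply: eq_bigr => I' _.
    transitivity (\sum_(r : {ffun D -> W}) \sum_(J : {set W}) F I' r J * (x \in lift I')%:R).
      apply: eq_bigr => r _; apply: eq_bigr => J _.
      case: (eqVneq (F I' r J) 0) => [->|/Fz[_ wz qz]]; first by rewrite !mul0r.
      have [_ _ Q3 _] := Hq r (Hw _ _ wz); have [_ _ Qin _] := Q3 J qz.
      rewrite inE; case: (boolP (x \in J)) => xJ; last by rewrite orbF.
      have [u uT xu] := Qin x xJ; by move: vT; rewrite (Luniq xv xu) uT.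
    under eq_bigr do rewrite -big_distrl /=.
    by rewrite -big_distrl /= inner.
  have xnI : forall I', x \notin lift I'.
    move=> I'; apply/negP => xI; have := lift_T I' vT.
    by move/setP/(_ x); rewrite !inE xI xv.
  transitivity (\sum_(I' : {set W'}) \sum_(r : {ffun D -> W})
      p' I' * wgt I' r * ((x \notin Rem r)%:R / (#|L v| - (v \in Dset))%:R)).
    apply: eq_bigr => I' _; apply: eq_bigr => r _.
    case: (eqVneq (wgt I' r) 0) => [z|wz].
      by rewrite z mulr0 mul0r big1 // => J _; rewrite /F z mulr0 !mul0r.
    have [_ _ _ Q4] := Hq r (Hw _ _ wz).
    rewrite -(Q4 v x vT xv) big_distrr /=; apply: eq_bigr => J _.
    by rewrite inE (negbTE (xnI I')) /= /F mulrA.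
  case: (boolP (v \in Dset)) => vD; last first.
    rewrite /= subn0.
    transitivity (\sum_(I' : {set W'}) p' I' * (#|L v|%:R)^-1); last first.
      by rewrite -big_distrl /= p'1 mul1r.
    apply: eq_bigr => I' _.
    case: (eqVneq (p' I') 0) => [z|pz].
      by rewrite z mul0r big1 // => r _; rewrite !mul0r.
    have -> : p' I' * (#|L v|%:R)^-1 =
        \sum_(r : {ffun D -> W}) p' I' * wgt I' r * (#|L v|%:R)^-1.
      by rewrite -big_distrl -big_distrr /= wgt_sum ?mulr1 //; apply: Hp'.
    apply: eq_bigr => r _.
    case: (eqVneq (wgt I' r) 0) => [z|wz]; first by rewrite z mulr0 !mul0r.
    by rewrite (Rem_notD (Hw _ _ wz) xv vD) mul1r.
  pose d := (Sub v vD : D).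
  have a2 : (2 <= #|L v|)%N.
    by have /andP[e1 n1] := nbP vD; case: (Hii vT n1 e1).
  transitivity (\sum_(I' : {set W'}) p' I' * ((1 - rho v I' x) / (#|L v| - 1)%:R)).
    apply: eq_bigr => I' _.
    case: (eqVneq (p' I') 0) => [z|pz].
      by rewrite z mul0r big1 // => r _; rewrite !mul0r.
    have G := Hp' _ pz.
    have -> : rho v I' x = rho (val d) I' x by [].
    have -> : p' I' * ((1 - rho v I' x) / (#|L v| - 1)%:R) =
       \sum_(r : {ffun D -> W}) p' I' * (wgt I' r - wgt I' r * (r d == x)%:R) / (#|L v| - 1)%:R.
      rewrite -big_distrl -big_distrr /= sumrB wgt_sum // wgt_marg //.
      by rewrite mulrA.
    apply: eq_bigr => r _.
    case: (eqVneq (wgt I' r) 0) => [z|wz]; first by rewrite z mul0r mulr0 subrr mulr0 !mul0r.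
    rewrite (Rem_D vD (Hw _ _ wz) xv) eq_sym.
    by case: (r d == x) => /=; ring.
  under eq_bigr do rewrite mulrA mulrBr mulr1.
  rewrite -big_distrl /= sumrB p'1.
  have -> : \sum_(I' : {set W'}) p' I' * rho v I' x = (#|L v|%:R)^-1.
    have -> : v = val d by [].
    by apply: rho_marg; [apply: valP|].
  have an : (#|L v|%:R : R) != 0 by rewrite pnatr_eq0 -lt0n; apply: leq_trans a2.
  have an1 : ((#|L v| - 1)%N%:R : R) != 0.
    by rewrite pnatr_eq0 subn_eq0 -ltnNge.
  rewrite natrB; last by apply: leq_trans a2.
  rewrite natrB in an1; last by apply: leq_trans a2.
  by field; rewrite an an1.
Qed.

End Main.

Unset Implicit Arguments.

Theorem mainTheorem11 (R : realFieldType) (V W : finType) (e : rel V)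
    (h : rel W) (L : V -> {set W}) (T : {set V}) :
  simple_graph e ->
  is_cover e h L ->
  (* (i) *)
  (forall u, u \in T -> (#|[set v | e u v & v \notin T]| <= 1)%N) ->
  (* (ii) *)
  (forall u v, u \in T -> v \notin T -> e u v ->
     (2 <= #|L u|)%N /\ (#|L u| <= #|L v|)%N) ->
  (* (iii) *)
  frac_packing R (restr_cover_rel L (~: T) h) (restr_cover_list L (~: T)) ->
  (* (iv) *)
  (forall (WT : finType) (hT : rel WT) (LT : sub_vert T -> {set WT}),
     is_cover (sub_rel T e) hT LT ->
     (forall u : sub_vert T,
        #|LT u| = if has_out_nbr e T (val u) then (#|L (val u)| - 1)%N
                  else #|L (val u)|) ->
     frac_packing R hT LT) ->
  frac_packing R h L.
Proof.
move=> He HC Hi Hii [p' [p'0 p'T p'1 p'm]] Hiv.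
exact: (@final R V W e h L T He HC Hi Hii p' p'0 p'T p'1 p'm Hiv).
Qed.
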